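(* Let $\mathcal{T}\in\mathbb{K}^{R\times R\times K}$ be slice mix invertible. Then for every nonzero $\boldsymbol{\lambda}\in\mathbb{K}^K$, $\mathrm{am}(\mathrm{span}(\boldsymbol{\lambda}))\geq\mathrm{gm}(\mathrm{span}(\boldsymbol{\lambda}))$. In particular, if $(\mathrm{span}(\boldsymbol{\lambda}),\mathbf{x})$ is a JGE pair of $\mathcal{T}$, then there is an integer $m>0$ with $p_{\mathcal{T}}(\boldsymbol{\gamma})=(\lambda_1\gamma_1+\cdots+\lambda_K\gamma_K)^m g(\boldsymbol{\gamma})$ for some nonzero polynomial $g$. Furthermore, if $\mathcal{T}$ has border $\mathbb{K}$-rank $R$, then $p_{\mathcal{T}}$ factors as a product of $R$ linear forms in $\boldsymbol{\gamma}$, so $\mathcal{T}$ has $R$ JGE values counting algebraic multiplicity.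
   Context: $\mathbb{K}$ denotes $\mathbb{R}$ or $\mathbb{C}$. For $\mathcal{T}\in\mathbb{K}^{R\times R\times K}$ with slices $\mathbf{T}_k=\mathcal{T}(:,:,k)$: slice mix invertible means some linear combination of the $\mathbf{T}_k$ is invertible. A nonzero $\mathbf{x}$ is a JGE vector if there are $\boldsymbol{\lambda}\in\mathbb{K}^K$ and nonzero $\mathbf{y}$ with $\mathbf{T}_\ell\mathbf{x}=\lambda_\ell\mathbf{y}$ for all $\ell$; $\mathrm{span}(\boldsymbol{\lambda})$ is a JGE value, $(\mathrm{span}(\boldsymbol{\lambda}),\mathbf{x})$ a JGE pair. $p_{\mathcal{T}}(\boldsymbol{\gamma})=\det(\sum_{k=1}^K\gamma_k\mathbf{T}_k)$. $\mathrm{am}(\mathrm{span}(\boldsymbol{\lambda}))$ is the largest $m$ such that $(\sum_k\lambda_k\gamma_k)^m$ divides $p_{\mathcal{T}}$; $\mathrm{gm}(\mathrm{span}(\boldsymbol{\lambda}))$ is the dimension of the span of all $\mathbf{x}$ with $(\mathrm{span}(\boldsymbol{\lambda}),\mathbf{x})$ a JGE pair. The border $\mathbb{K}$-rank of a tensor is the least $R$ such that it is a limit of tensors of $\mathbb{K}$-rank at most $R$ ($\mathbb{K}$-rank: least number of rank one tensors with $\mathbb{K}$-factors summing to it). *)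

(* Defs.v *)
From HB Require Import structures.
From mathcomp Require Import all_boot all_order all_algebra.
From mathcomp Require Import boolp Rstruct complex mpoly.
Set Implicit Arguments. Unset Strict Implicit. Unset Printing Implicit Defensive.
Import GRing.Theory Num.Theory.
Local Open Scope ring_scope.

Definition KR (b : bool) : numFieldType :=
  if b then (Rdefinitions.R : numFieldType)
  else (complex Rdefinitions.R : numFieldType).

Section Tensors.
Variables (F : numFieldType) (n K : nat).

(* A tensor T in F^{n x n x K} is given by its slices T k = T(:,:,k),
   so T(i,j,k) = T k i j. *)
Definition tensor := 'I_K -> 'M[F]_n.

Definition slice_mix_invertible (T : tensor) : Prop :=
  exists gam : 'I_K -> F, (\sum_k gam k *: T k) \in unitmx.

Definition jge_rel (T : tensor) (lam : 'rV[F]_K) (x : 'cV[F]_n) : Prop :=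
  x != 0 /\ exists y : 'cV[F]_n, y != 0 /\ forall l, T l *m x = lam 0 l *: y.

Definition jge_pair (T : tensor) (lam : 'rV[F]_K) (x : 'cV[F]_n) : Prop :=
  exists mu : 'rV[F]_K, (mu == lam)%MS /\ jge_rel T mu x.

Definition jge_value (T : tensor) (lam : 'rV[F]_K) : Prop :=
  exists x, jge_pair T lam x.

Definition pT (T : tensor) : {mpoly F[K]} :=
  \det (\matrix_(i < n, j < n) \sum_(k < K) 'X_k * (T k i j)%:MP).

Definition lform (lam : 'rV[F]_K) : {mpoly F[K]} :=
  \sum_(k < K) (lam 0 k)%:MP * 'X_k.

(* algebraic multiplicity: largest m with lform(lam)^m | p_T
   (the degree bound msize (pT T) is harmless when pT T != 0) *)
Definition am (T : tensor) (lam : 'rV[F]_K) : nat :=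
  \max_(m < (msize (pT T)).+1 |
          `[< exists q : {mpoly F[K]}, pT T = lform lam ^+ m * q >]) m.

(* geometric multiplicity: dimension of the span of all x such that
   (span(lam), x) is a JGE pair, i.e. the largest number of linearly
   independent such x *)
Definition gm (T : tensor) (lam : 'rV[F]_K) : nat :=
  \max_(d < n.+1 |
          `[< exists X : 'M[F]_(n, d),
                \rank X = d /\ forall j, jge_pair T lam (col j X) >]) d.

Definition rank_le (T : tensor) (r : nat) : Prop :=
  exists (a b : 'I_r -> 'I_n -> F) (c : 'I_r -> 'I_K -> F),
    forall k i j, T k i j = \sum_(s < r) a s i * b s j * c s k.

Definition tensor_cvg (S : nat -> tensor) (T : tensor) : Prop :=
  forall eps : F, 0 < eps -> exists N : nat, forall m : nat, (N <= m)%N ->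
    forall k i j, `|S m k i j - T k i j| < eps.

Definition border_rank_le (T : tensor) (r : nat) : Prop :=
  exists S : nat -> tensor, (forall m, rank_le (S m) r) /\ tensor_cvg S T.

Definition border_rank_eq (T : tensor) (r : nat) : Prop :=
  border_rank_le T r /\ forall r', (r' < r)%N -> ~ border_rank_le T r'.

End Tensors.

(* Main.v *)
Require Import Defs.
From HB Require Import structures.
From mathcomp Require Import all_boot all_order all_algebra.
From mathcomp Require Import boolp Rstruct complex mpoly.
From mathcomp Require Import ring lra zify.
Import Order.TTheory GRing.Theory Num.Theory.
Set Implicit Arguments. Unset Strict Implicit. Unset Printing Implicit Defensive.
Local Open Scope ring_scope.

Section Cvg.
Variable F : numFieldType.
Definition cvgF (u : nat -> F) (l : F) :=
  forall eps : F, 0 < eps -> exists N, forall t, (N <= t)%N -> `|u t - l| < eps.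

Lemma cvg0_le (w z : nat -> F) :
  (exists N, forall t, (N <= t)%N -> `|w t| <= `|z t|) -> cvgF z 0 -> cvgF w 0.
Proof.
move=> [N1 h1] hz e e0; have [N2 h2] := hz e e0.
exists (maxn N1 N2) => t ht; rewrite subr0.
apply: (le_lt_trans (h1 t (leq_trans (leq_maxl _ _) ht))).
by have := h2 t (leq_trans (leq_maxr _ _) ht); rewrite subr0.
Qed.

Lemma cvg_subP (u : nat -> F) l : cvgF u l <-> cvgF (fun t => u t - l) 0.
Proof. by split=> h e e0; have [N hN] := h e e0; exists N => t ht;
  have := hN t ht; rewrite subr0. Qed.

Lemma cvg0D (u v : nat -> F) : cvgF u 0 -> cvgF v 0 -> cvgF (fun t => u t + v t) 0.
Proof.
move=> hu hv e e0; have e2: 0 < e / 2 by rewrite divr_gt0.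
have [N1 h1] := hu _ e2; have [N2 h2] := hv _ e2.
exists (maxn N1 N2) => t ht; rewrite subr0.
apply: (le_lt_trans (ler_normD _ _)); rewrite [e]splitr.
have := h1 t (leq_trans (leq_maxl _ _) ht); have := h2 t (leq_trans (leq_maxr _ _) ht).
rewrite !subr0 => a b; exact: ltrD.
Qed.

Lemma cvg0M (u v : nat -> F) : cvgF u 0 -> cvgF v 0 -> cvgF (fun t => u t * v t) 0.
Proof.
move=> hu hv e e0.
have [N1 h1] := hu _ ltr01; have [N2 h2] := hv _ e0.
exists (maxn N1 N2) => t ht; rewrite subr0 normrM.
have := h1 t (leq_trans (leq_maxl _ _) ht); have := h2 t (leq_trans (leq_maxr _ _) ht).
rewrite !subr0 => b a.
apply: (le_lt_trans (y := 1 * `|v t|)); last by rewrite mul1r.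
by apply: ler_wpM2r => //; apply: ltW.
Qed.

Lemma cvg0Mc (c : F) (u : nat -> F) : cvgF u 0 -> cvgF (fun t => c * u t) 0.
Proof.
move=> hu e e0.
have c1 : 0 < `|c| + 1 by apply: ltr_wpDl => //.
have [N h] := hu (e / (`|c| + 1)) (divr_gt0 e0 c1).
exists N => t ht; rewrite subr0 normrM.
have := h t ht; rewrite subr0 ltr_pdivlMr // => a.
apply: le_lt_trans a; rewrite mulrC; apply: ler_wpM2l => //.
by rewrite lerDl.
Qed.

Lemma cvg_cst (c : F) : cvgF (fun _ => c) c.
Proof. by move=> e e0; exists 0%N => t _; rewrite subrr normr0. Qed.

Lemma cvgD (u v : nat -> F) l m : cvgF u l -> cvgF v m -> cvgF (fun t => u t + v t) (l + m).
Proof.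
move=> /cvg_subP hu /cvg_subP hv; apply/cvg_subP.
have := cvg0D hu hv; apply: cvg0_le; exists 0%N => t _.
by rewrite opprD addrACA.
Qed.

Lemma cvgN (u : nat -> F) l : cvgF u l -> cvgF (fun t => - u t) (- l).
Proof.
move=> /cvg_subP hu; apply/cvg_subP; apply: cvg0_le hu; exists 0%N => t _.
by rewrite -opprD normrN.
Qed.

Lemma cvgM (u v : nat -> F) l m : cvgF u l -> cvgF v m -> cvgF (fun t => u t * v t) (l * m).
Proof.
move=> /cvg_subP hu /cvg_subP hv; apply/cvg_subP.
have := cvg0D (cvg0M hu hv) (cvg0D (cvg0Mc l hv) (cvg0Mc m hu)).
apply: cvg0_le; exists 0%N => t _.
have -> : u t * v t - l * m = (u t - l) * (v t - m) + (l * (v t - m) + m * (u t - l)) by ring.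
by [].
Qed.
End Cvg.
Section Cvg2.
Variable F : numFieldType.
Implicit Types u v : nat -> F.

Lemma cvg_ext u v l : (forall t, u t = v t) -> cvgF u l -> cvgF v l.
Proof. by move=> e h eps e0; have [N hN] := h eps e0; exists N => t ht; rewrite -e; apply: hN. Qed.

Lemma cvg_uniq u l m : cvgF u l -> cvgF u m -> l = m.
Proof.
move=> hl hm; apply/eqP; rewrite -subr_eq0; apply/negPn/negP => ne.
have e0 : 0 < `|l - m| / 2 by rewrite divr_gt0 // normr_gt0.
have [N1 h1] := hl _ e0; have [N2 h2] := hm _ e0.
have a := h1 (maxn N1 N2) (leq_maxl _ _); have b := h2 (maxn N1 N2) (leq_maxr _ _).
have : `|l - m| < `|l - m| / 2 + `|l - m| / 2.
  apply: (le_lt_trans (ler_distD (u (maxn N1 N2)) _ _)).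
  by rewrite distrC; apply: ltrD.
by rewrite -splitr ltxx.
Qed.

Lemma cvg_sub_seq (phi : nat -> nat) u l : (forall t, (phi t < phi t.+1)%N) ->
  cvgF u l -> cvgF (fun t => u (phi t)) l.
Proof.
move=> inc h e e0; have [N hN] := h e e0; exists N => t ht; apply: hN.
apply: leq_trans ht _; elim: t => // t ih; exact: leq_ltn_trans ih (inc t).
Qed.

Lemma ev_fin (I : finType) (P : I -> nat -> Prop) :
  (forall i, exists N, forall t, (N <= t)%N -> P i t) ->
  exists N, forall i t, (N <= t)%N -> P i t.
Proof.
move=> h; have [f hf] := choice h; exists (\max_i f i) => i t ht.
by apply: hf; apply: leq_trans ht; apply: leq_bigmax.
Qed.

Lemma cvg_neq0_ev u l : l != 0 -> cvgF u l -> exists N, forall t, (N <= t)%N -> u t != 0.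
Proof.
move=> l0 h; have l0' : 0 < `|l| by rewrite normr_gt0.
have [N hN] := h _ l0'; exists N => t ht.
apply/eqP => u0; have := hN t ht; by rewrite u0 sub0r normrN ltxx.
Qed.
End Cvg2.

Section Closure.
Variable R : pzRingType.
Variable Cv : (nat -> R) -> R -> Prop.
Hypothesis Cv_ext : forall u v l, (forall t, u t = v t) -> Cv u l -> Cv v l.
Hypothesis Cv_cst : forall c, Cv (fun _ => c) c.
Hypothesis Cv_add : forall u v l m, Cv u l -> Cv v m -> Cv (fun t => u t + v t) (l + m).
Hypothesis Cv_mul : forall u v l m, Cv u l -> Cv v m -> Cv (fun t => u t * v t) (l * m).

Lemma Cv_sum (I : Type) (r : seq I) (P : pred I) (u : I -> nat -> R) (l : I -> R) :
  (forall i, P i -> Cv (u i) (l i)) ->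
  Cv (fun t => \sum_(i <- r | P i) u i t) (\sum_(i <- r | P i) l i).
Proof.
move=> h; elim: r => [|i r ih].
  by rewrite big_nil; apply: Cv_ext (Cv_cst 0) => t; rewrite big_nil.
rewrite big_cons; case: ifP => Pi.
  by apply: Cv_ext (Cv_add (h i Pi) ih) => t; rewrite big_cons Pi.
by apply: Cv_ext ih => t; rewrite big_cons Pi.
Qed.

Lemma Cv_prod (I : Type) (r : seq I) (P : pred I) (u : I -> nat -> R) (l : I -> R) :
  (forall i, P i -> Cv (u i) (l i)) ->
  Cv (fun t => \prod_(i <- r | P i) u i t) (\prod_(i <- r | P i) l i).
Proof.
move=> h; elim: r => [|i r ih].
  by rewrite big_nil; apply: Cv_ext (Cv_cst 1) => t; rewrite big_nil.
rewrite big_cons; case: ifP => Pi.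
  by apply: Cv_ext (Cv_mul (h i Pi) ih) => t; rewrite big_cons Pi.
by apply: Cv_ext ih => t; rewrite big_cons Pi.
Qed.

Lemma Cv_det n (A : nat -> 'M[R]_n) (L : 'M[R]_n) :
  (forall i j, Cv (fun t => A t i j) (L i j)) -> Cv (fun t => \det (A t)) (\det L).
Proof.
move=> h; rewrite /determinant.
apply: Cv_ext; last first.
  apply: Cv_sum => s _; apply: Cv_mul; first exact: Cv_cst.
  by apply: Cv_prod => i _; apply: h.
by [].
Qed.
End Closure.
From Stdlib Require Import Rtopology.
Local Notation RR := Rdefinitions.R.

Lemma eps_inv (e : RR) : 0 < e -> exists k : nat, (k.+1%:R)^-1 < e.
Proof.
move=> e0; have ie : 0 < e^-1 by rewrite invr_gt0.
have h := @archi_boundP _ (e^-1) (ltW ie).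
exists (Num.Def.archi_bound e^-1).
have : (((Num.Def.archi_bound e^-1).+1)%:R)^-1 < (e^-1)^-1.
  rewrite ltf_pV2 ?posrE ?ltr0n //; apply: lt_trans h _; by rewrite ltr_nat.
by rewrite invrK.

Qed.

Lemma BW_R (u : nat -> RR) : (forall t, `|u t| <= 1) ->
  exists phi : nat -> nat, (forall t, (phi t < phi t.+1)%N) /\
    exists l, cvgF (fun t => u (phi t)) l.
Proof.
move=> hb.
have [l hl] : exists l, ValAdh u l.
  apply: (Bolzano_Weierstrass u _ (compact_P3 (-1) 1)) => t.
  have := hb t; rewrite ler_norml => /andP[a b]; split; exact/RleP.
have hg : forall (Nk : nat * nat), exists p, (Nk.1 <= p)%N /\ `|u p - l| < (Nk.2.+1%:R)^-1.
  move=> [N k]; have kp : (0 < (k.+1%:R : RR)^-1) by rewrite invr_gt0 ltr0n.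
  have [p [hp1 hp2]] := hl (disc l (RIneq.mkposreal _ (elimT RltP kp))) N
     (ex_intro _ (RIneq.mkposreal _ (elimT RltP kp)) (fun y h => h)).
  exists p; split; first by apply/ssrnat.leP.
  by apply/RltP.
have [g hg'] := choice hg.
pose phi := fix phi t := if t is t'.+1 then g ((phi t').+1, t) else g (0%N, 0%N).
exists phi; split.
  by move=> t /=; case: (hg' ((phi t).+1, t.+1)).
exists l => e e0; have [k hk] := eps_inv e0; exists k => t ht.
have h1 : `|u (phi t) - l| < (t.+1%:R)^-1.
  by case: t {ht} => [|t] /=; [case: (hg' (0%N, 0%N)) | case: (hg' ((phi t).+1, t.+1))].
apply: (lt_trans h1); apply: le_lt_trans hk.
by rewrite lef_pV2 ?posrE ?ltr0n // ler_nat.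
Qed.
Local Notation CC := (complex Rdefinitions.R).

Lemma sq_le_sum (x y : RR) : x^+2 + y^+2 <= (`|x| + `|y|)^+2.
Proof.
have hx := normr_ge0 x; have hy := normr_ge0 y.
rewrite -[x^+2]real_normK ?num_real // -[y^+2]real_normK ?num_real //; nra.
Qed.

Lemma BW_C (u : nat -> CC) : (forall t, `|u t| <= 1) ->
  exists phi : nat -> nat, (forall t, (phi t < phi t.+1)%N) /\
    exists l, cvgF (fun t => u (phi t)) l.
Proof.
move=> hb.
have hRe : forall t, `|complex.Re (u t)| <= 1.
  by move=> t; rewrite -lecR; apply: le_trans (normc_ge_Re _) (hb t).
have hIm : forall t, `|complex.Im (u t)| <= 1.
  move=> t; have := normc_ge_Re (u t * 'i%C); rewrite ReiNIm normrN => h.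
  rewrite -lecR; apply: le_trans h _.
  rewrite normrM; apply: le_trans (hb t).
  have -> : `|'i%C : CC| = 1 by rewrite normc_def /= expr0n /= add0r expr1n sqrtr1.
  by rewrite mulr1.
have [phi1 [inc1 [a ha]]] := BW_R hRe.
have [phi2 [inc2 [b hb2]]] := BW_R (fun t => hIm (phi1 t)).
have inc : forall t, (phi1 (phi2 t) < phi1 (phi2 t.+1))%N.
  move=> t; have mono : forall m k, (m < k)%N -> (phi1 m < phi1 k)%N.
    move=> m k; elim: k => // k ih; rewrite ltnS leq_eqVlt => /orP[/eqP->|/ih h].
      exact: inc1.
    exact: ltn_trans h (inc1 k).
  exact: mono.
exists (fun t => phi1 (phi2 t)); split => //.
exists (a +i* b)%C => e e0.
move: (e0); rewrite ltcE /= => /andP[/eqP Ie Re0].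
have d0 : 0 < complex.Re e / 2 by rewrite divr_gt0.
have [N1 h1] := cvg_sub_seq inc2 ha d0.
have [N2 h2] := hb2 _ d0.
exists (maxn N1 N2) => t ht.
have := h1 t (leq_trans (leq_maxl _ _) ht); have := h2 t (leq_trans (leq_maxr _ _) ht).
move=> y x.
have -> : e = (complex.Re e)%:C%C by rewrite [LHS]complexE Ie mulr0 addr0.
rewrite normc_def !raddfB /= ltcR.
apply: le_lt_trans (ler_wsqrtr (sq_le_sum _ _)) _.
rewrite sqrtr_sqr ger0_norm ?addr_ge0 // [complex.Re e]splitr.
by apply: ltrD.
Qed.
Lemma inc_mono (phi : nat -> nat) : (forall t, (phi t < phi t.+1)%N) ->
  forall m k, (m < k)%N -> (phi m < phi k)%N.
Proof.
move=> inc1 m k; elim: k => // k ih; rewrite ltnS leq_eqVlt => /orP[/eqP->|/ih h].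
  exact: inc1.
exact: ltn_trans h (inc1 k).
Qed.

Lemma inc_comp (phi1 phi2 : nat -> nat) : (forall t, (phi1 t < phi1 t.+1)%N) ->
  (forall t, (phi2 t < phi2 t.+1)%N) -> forall t, (phi1 (phi2 t) < phi1 (phi2 t.+1))%N.
Proof. by move=> h1 h2 t; apply: inc_mono. Qed.

Lemma BW_K (b : bool) (u : nat -> KR b) : (forall t, `|u t| <= 1) ->
  exists phi : nat -> nat, (forall t, (phi t < phi t.+1)%N) /\
    exists l, cvgF (fun t => u (phi t)) l.
Proof. by case: b u => u; [exact: BW_R | exact: BW_C]. Qed.

Section BWV.
Variable F : numFieldType.
Hypothesis BWs : forall u : nat -> F, (forall t, `|u t| <= 1) ->
  exists phi : nat -> nat, (forall t, (phi t < phi t.+1)%N) /\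
    exists l, cvgF (fun t => u (phi t)) l.

Lemma BW_vec (I : finType) (u : nat -> I -> F) : (forall t i, `|u t i| <= 1) ->
  exists phi : nat -> nat, (forall t, (phi t < phi t.+1)%N) /\
    exists l : I -> F, forall i, cvgF (fun t => u (phi t) i) (l i).
Proof.
move=> hb.
suff [phi [inc [l hl]]] : exists phi : nat -> nat, (forall t, (phi t < phi t.+1)%N) /\
    exists l : I -> F, forall i, i \in enum I -> cvgF (fun t => u (phi t) i) (l i).
  by exists phi; split => //; exists l => i; apply: hl; rewrite mem_enum.
elim: (enum I) => [|i s [phi1 [inc1 [l1 hl1]]]].
  by exists id; split => //; exists (fun _ => 0).
have [phi2 [inc2 [c hc]]] := BWs (fun t => hb (phi1 t) i).
exists (fun t => phi1 (phi2 t)); split; first exact: inc_comp.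
exists (fun j => if j == i then c else l1 j) => j; rewrite inE.
case: eqP => [-> _ //|_ /= js].
exact: (cvg_sub_seq inc2 (hl1 j js)).
Qed.
End BWV.
Section PartA.
Variables (F : numFieldType) (n K : nat).
Implicit Types (T : 'I_K -> 'M[F]_n).

Definition MP T : 'M[{mpoly F[K]}]_n :=
  \matrix_(i < n, j < n) \sum_(k < K) 'X_k * (T k i j)%:MP.

Lemma pTE T : pT T = \det (MP T). Proof. by []. Qed.

Lemma MP_mul T p (V : 'M[F]_(n, p)) i j :
  (MP T *m map_mx (@mpolyC K F) V) i j = \sum_(l < K) 'X_l * ((T l *m V) i j)%:MP.
Proof.
rewrite !mxE; under eq_bigr => k _ do rewrite !mxE big_distrl /=.
rewrite exchange_big /=; apply: eq_bigr => l _.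
rewrite mxE rmorph_sum big_distrr /=; apply: eq_bigr => k _.
by rewrite rmorphM /= mulrA.
Qed.

Lemma lformZ (a : F) (lam : 'rV[F]_K) : lform (a *: lam) = a%:MP * lform lam.
Proof.
rewrite /lform big_distrr /=; apply: eq_bigr => k _.
by rewrite mxE rmorphM /= mulrA.
Qed.

Lemma MP_lin T p (V : 'M[F]_(n, p)) (lam : 'rV[F]_K) (Z : 'M[F]_(n, p)) i j :
  (forall l, (T l *m V) i j = lam 0 l * Z i j) ->
  (MP T *m map_mx (@mpolyC K F) V) i j = lform lam * (Z i j)%:MP.
Proof.
move=> h; rewrite MP_mul /lform big_distrl /=; apply: eq_bigr => l _.
by rewrite h rmorphM /= mulrA [_ * (lam 0 l)%:MP]mulrC.
Qed.

Lemma mevalMP T (g : 'I_K -> F) : map_mx (meval g) (MP T) = \sum_k g k *: T k.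
Proof.
apply/matrixP => i j; rewrite !mxE summxE rmorph_sum /=; apply: eq_bigr => k _.
by rewrite rmorphM /= mevalXU mevalC !mxE.
Qed.

Lemma pT_neq0 T : slice_mix_invertible T -> pT T != 0.
Proof.
move=> [g hg]; apply/eqP => h0.
have : meval g (pT T) = \det (\sum_k g k *: T k).
  by rewrite pTE -det_map_mx mevalMP.
rewrite h0 raddf0 => /esym/eqP; rewrite -[_ == 0]negbK -unitfE -unitmxE hg.
by [].
Qed.
End PartA.
Section PartA2.
Variables (F : numFieldType) (n K : nat).
Implicit Types (T : 'I_K -> 'M[F]_n).

Lemma mul_pid_entry (R : pzSemiRingType) m (A : 'M[R]_(m, n)) d i j :
  (A *m pid_mx d) i j = A i j * (j < d)%:R.
Proof.
rewrite mxE (bigD1 j) //= big1 ?addr0; first by rewrite mxE eqxx.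
by move=> k; rewrite mxE -val_eqE /= => /negbTE ->; rewrite mulr0.
Qed.

Lemma pT_divX T d (X Y : 'M[F]_(n, d)) (lam : 'rV[F]_K) :
  \rank X = d -> (forall l, T l *m X = lam 0 l *: Y) ->
  exists q, pT T = lform lam ^+ d * q.
Proof.
move=> hr hXY.
have dn : (d <= n)%N by rewrite -hr rank_leq_row.
set L := col_ebase X; set U := row_ebase X.
have eX : L *m pid_mx d *m U = X by have := mulmx_ebase X; rewrite hr.
set W : 'M[F]_(d, n) := invmx U *m pid_mx d.
have eLP : L *m (pid_mx d : 'M[F]_n) = X *m W.
  rewrite /W mulmxA -eX mulmxK ?row_ebase_unit // -mulmxA mul_pid_mx.
  by rewrite !minnn.
set Z := Y *m W.
have hTZ : forall l, T l *m (L *m pid_mx d) = lam 0 l *: Z.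
  by move=> l; rewrite eLP mulmxA hXY /Z scalemxAl.
set N := MP T *m map_mx (@mpolyC K F) L.
set l0 := lform lam.
have hN : forall (i j : 'I_n), (j < d)%N -> N i j = l0 * (Z i j)%:MP.
  move=> i j jd.
  have h1 : forall l, (T l *m (L *m pid_mx d)) i j = lam 0 l * Z i j.
    by move=> l; rewrite hTZ mxE.
  have := MP_lin h1.
  rewrite map_mxM mulmxA -/N map_pid_mx mul_pid_entry jd mulr1 => <-.
  by [].
have eDet : \det N = pT T * (\det L)%:MP by rewrite /N det_mulmx det_map_mx.
clearbody N Z.
set N' := \matrix_(i, j) (if (j < d)%N then (Z i j)%:MP else N i j).
set D := diag_mx (\row_(j < n) (if (j < d)%N then l0 else 1)).
have eN : N = N' *m D.
  apply/matrixP => i j; rewrite mul_mx_diag !mxE.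
  by case: ifP => jd; [rewrite hN // mulrC | rewrite mulr1].
have dD : \det D = l0 ^+ d.
  rewrite det_diag.
  transitivity (\prod_(j < n | (j < d)%N) l0).
    by rewrite [RHS]big_mkcond; apply: eq_bigr => j _; rewrite mxE.
  by rewrite -(big_ord_widen _ (fun _ => l0) dn) prodr_const card_ord.
have dL : \det L != 0 by rewrite -unitfE -unitmxE col_ebase_unit.
exists (\det N' * ((\det L)^-1)%:MP).
move: eDet; rewrite eN det_mulmx dD => e.
have -> : pT T = pT T * (\det L)%:MP * ((\det L)^-1)%:MP.
  by rewrite -mulrA -rmorphM /= divff // rmorph1 mulr1.
by rewrite -e mulrA [l0 ^+ d * _]mulrC.
Qed.
End PartA2.
Section PartB.
Variables (F : numFieldType) (n K : nat).
Implicit Types (T : 'I_K -> 'M[F]_n).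

Lemma jge_pair_lin T (lam : 'rV[F]_K) x : jge_pair T lam x ->
  x != 0 /\ exists y, forall l, T l *m x = lam 0 l *: y.
Proof.
move=> [mu [/andP[/submxP [D ->] _] [x0 [y [_ hy]]]]]; split => //.
exists (D 0 0 *: y) => l; rewrite hy !mxE big_ord1 scalerA; congr (_ *: _).
by rewrite mulrC; congr (_ * _); congr (D _ _ * _); apply: val_inj; case: (0 : 'I_1) => -[].
Qed.

Lemma jge_cols T (lam : 'rV[F]_K) d (X : 'M[F]_(n, d)) :
  (forall j, jge_pair T lam (col j X)) ->
  exists Y : 'M[F]_(n, d), forall l, T l *m X = lam 0 l *: Y.
Proof.
move=> h.
have h' : forall j, exists y : 'cV[F]_n, forall l, T l *m col j X = lam 0 l *: y.
  by move=> j; have [_ hy] := jge_pair_lin (h j).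
have [yf hyf] := choice h'.
exists (\matrix_(i, j) yf j i 0) => l; apply/matrixP => i j.
have := congr1 (fun M : 'cV[F]_n => M i 0) (hyf j l).
by rewrite !mxE => <-; apply: eq_bigr => k _; rewrite !mxE.
Qed.

Lemma lform_coef (lam : 'rV[F]_K) (k : 'I_K) : (lform lam)@_(mnm1 k) = lam 0 k.
Proof.
rewrite /lform raddf_sum /= (bigD1 k) //= big1 ?addr0.
  by rewrite mcoeffCM mcoeffXU eqxx mulr1.
by move=> j /negbTE jk; rewrite mcoeffCM mcoeffXU jk mulr0.
Qed.

Lemma lform_size (lam : 'rV[F]_K) : lam != 0 -> (2 <= msize (lform lam))%N.
Proof.
move=> l0.
have [k hk] : exists k, lam 0 k != 0.
  apply/existsP; move: l0; apply: contraR => /existsPn h; apply/eqP/matrixP => i j.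
  by rewrite (ord1 i) mxE; apply/eqP; exact: negbNE (h j).
have : mnm1 k \in msupp (lform lam) by rewrite -[_ \in _]negbK -mcoeff_eq0 lform_coef.
by move/msize_mdeg_lt; rewrite mdeg1.
Qed.

Lemma lform_neq0 (lam : 'rV[F]_K) : lam != 0 -> lform lam != 0.
Proof.
move=> /lform_size; apply: contraTneq => ->; by rewrite msize0.
Qed.

Lemma lformX_size (lam : 'rV[F]_K) d : lam != 0 -> (d < msize (lform lam ^+ d))%N.
Proof.
move=> l0; elim: d => [|d ih]; first by rewrite expr0 msize1.
rewrite exprSr msizeM ?expf_neq0 ?lform_neq0 //.
have := lform_size l0; move: ih; set a := msize _; set b := msize _. lia.
Qed.
End PartB.
Section PartC.
Variables (F : numFieldType) (n K : nat).
Implicit Types (T : 'I_K -> 'M[F]_n).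

Lemma part1 T : slice_mix_invertible T ->
  forall lam : 'rV[F]_K, lam != 0 -> (gm T lam <= am T lam)%N.
Proof.
move=> hT lam l0; apply/bigmax_leqP => d /asboolP [X [hr hX]].
have [Y hY] := jge_cols hX.
have [q hq] := pT_divX hr hY.
have p0 := pT_neq0 hT.
have q0 : q != 0 by apply: contraNneq p0 => q0; rewrite hq q0 mulr0.
have hd : (d <= msize (pT T))%N.
  rewrite hq msizeM ?expf_neq0 ?lform_neq0 //.
  have := lformX_size d l0; have : (0 < msize q)%N by rewrite lt0n mmeasure_poly_eq0.
  set a := msize _; set b := msize _; lia.
have dl : (d < (msize (pT T)).+1)%N by [].
have := @leq_bigmax_cond _ _ (fun m : 'I_(msize (pT T)).+1 => nat_of_ord m) (Ordinal dl); apply.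
by apply/asboolP; exists q.
Qed.

Lemma part2 T : slice_mix_invertible T ->
  forall (lam : 'rV[F]_K) (x : 'cV[F]_n), jge_pair T lam x ->
     exists m : nat, (0 < m)%N /\
       exists g : {mpoly F[K]}, g != 0 /\ pT T = lform lam ^+ m * g.
Proof.
move=> hT lam x hx.
have [x0 [y hy]] := jge_pair_lin hx.
have hr : \rank x = 1%N.
  apply/eqP; rewrite eqn_leq rank_leq_col lt0n mxrank_eq0 x0 //.
have [q hq] := pT_divX hr hy.
exists 1%N; split => //; exists q; split => //.
by apply: contraNneq (pT_neq0 hT) => q0; rewrite hq q0 mulr0.
Qed.
End PartC.
Section PartD.
Variables (F : numFieldType) (n K : nat).
Implicit Types (T : 'I_K -> 'M[F]_n).

Lemma rel_jge T (g : 'I_K -> F) (c : 'rV[F]_K) (x : 'cV[F]_n) :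
  (\sum_k g k *: T k) \in unitmx -> c != 0 -> x != 0 ->
  (forall k l i, c 0 l * (T k *m x) i 0 = c 0 k * (T l *m x) i 0) ->
  jge_rel T c x.
Proof.
move=> hu c0 x0 hrel.
have [l0 hl0] : exists l, c 0 l != 0.
  apply/existsP; move: c0; apply: contraR => /existsPn h; apply/eqP/matrixP => i j.
  by rewrite (ord1 i) mxE; apply/eqP; exact: negbNE (h j).
split => //; exists ((c 0 l0)^-1 *: (T l0 *m x)); split.
  apply/eqP => y0.
  have y0' : T l0 *m x = 0.
    by move/eqP: y0; rewrite scaler_eq0 invr_eq0 (negbTE hl0) /= => /eqP.
  have hk : forall k, T k *m x = 0.
    move=> k; apply/matrixP => i j; rewrite (ord1 j) [RHS]mxE.
    have := hrel k l0 i; rewrite y0' [X in _ = _ * X]mxE mulr0 => /eqP.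
    by rewrite mulf_eq0 (negbTE hl0) /= => /eqP.
  have : (\sum_k g k *: T k) *m x = 0.
    rewrite mulmx_suml big1 // => k _; by rewrite -scalemxAl hk scaler0.
  move=> /(congr1 (mulmx (invmx (\sum_k g k *: T k)))).
  rewrite mulmxA mulVmx // mul1mx mulmx0 => /eqP; by rewrite (negbTE x0).
move=> l; apply/matrixP => i j; rewrite (ord1 j) [RHS]mxE [X in _ * X]mxE.
apply: (mulfI hl0); rewrite hrel.
set a := (T l0 *m x) i 0; set b := c 0 l; set e := c 0 l0.
by rewrite mulrCA mulVKf.
Qed.
End PartD.
Section MCvg.
Variables (F : numFieldType) (K : nat).
Definition mcvg (P : nat -> {mpoly F[K]}) (p : {mpoly F[K]}) :=
  forall m, cvgF (fun t => (P t)@_m) p@_m.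

Lemma mcvg_ext P Q p : (forall t, P t = Q t) -> mcvg P p -> mcvg Q p.
Proof. by move=> e h m; apply: cvg_ext (h m) => t; rewrite e. Qed.

Lemma mcvg_cst p : mcvg (fun _ => p) p.
Proof. by move=> m; apply: cvg_cst. Qed.

Lemma mcvg_add P Q p q : mcvg P p -> mcvg Q q -> mcvg (fun t => P t + Q t) (p + q).
Proof. by move=> hp hq m; rewrite mcoeffD; apply: cvg_ext (cvgD (hp m) (hq m)) => t; rewrite mcoeffD. Qed.

Lemma cvgF_sum (I : Type) (r : seq I) (Pr : pred I) (u : I -> nat -> F) (l : I -> F) :
  (forall i, Pr i -> cvgF (u i) (l i)) ->
  cvgF (fun t => \sum_(i <- r | Pr i) u i t) (\sum_(i <- r | Pr i) l i).
Proof. exact: (Cv_sum (@cvg_ext F) (@cvg_cst F) (@cvgD F)). Qed.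

Lemma cvgF_prod (I : Type) (r : seq I) (Pr : pred I) (u : I -> nat -> F) (l : I -> F) :
  (forall i, Pr i -> cvgF (u i) (l i)) ->
  cvgF (fun t => \prod_(i <- r | Pr i) u i t) (\prod_(i <- r | Pr i) l i).
Proof. exact: (Cv_prod (@cvg_ext F) (@cvg_cst F) (@cvgM F)). Qed.

Lemma cvgF_det n (A : nat -> 'M[F]_n) (L : 'M[F]_n) :
  (forall i j, cvgF (fun t => A t i j) (L i j)) -> cvgF (fun t => \det (A t)) (\det L).
Proof. exact: (Cv_det (@cvg_ext F) (@cvg_cst F) (@cvgD F) (@cvgM F)). Qed.

Lemma mcvg_mul P Q p q : mcvg P p -> mcvg Q q -> mcvg (fun t => P t * Q t) (p * q).
Proof.
move=> hp hq m; rewrite mcoeffM.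
apply: cvg_ext; last first.
  by apply: cvgF_sum => k _; apply: cvgM; [apply: hp | apply: hq].
by move=> t /=; rewrite mcoeffM.
Qed.

Lemma mcvgC (u : nat -> F) c : cvgF u c -> mcvg (fun t => (u t)%:MP) c%:MP.
Proof.
move=> h m; rewrite mcoeffC; apply: cvg_ext (cvgM h (cvg_cst _)) => t.
by rewrite mcoeffC.
Qed.

Lemma mcvg_uniq P p q : mcvg P p -> mcvg P q -> p = q.
Proof. by move=> hp hq; apply/mpolyP => m; apply: cvg_uniq (hp m) (hq m). Qed.

Lemma mcvg_sum (I : Type) (r : seq I) (Pr : pred I) (u : I -> nat -> {mpoly F[K]}) l :
  (forall i, Pr i -> mcvg (u i) (l i)) ->
  mcvg (fun t => \sum_(i <- r | Pr i) u i t) (\sum_(i <- r | Pr i) l i).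
Proof. exact: (Cv_sum (@mcvg_ext) (@mcvg_cst) (@mcvg_add)). Qed.

Lemma mcvg_prod (I : Type) (r : seq I) (Pr : pred I) (u : I -> nat -> {mpoly F[K]}) l :
  (forall i, Pr i -> mcvg (u i) (l i)) ->
  mcvg (fun t => \prod_(i <- r | Pr i) u i t) (\prod_(i <- r | Pr i) l i).
Proof. exact: (Cv_prod (@mcvg_ext) (@mcvg_cst) (@mcvg_mul)). Qed.

Lemma mcvg_det n (A : nat -> 'M[{mpoly F[K]}]_n) (L : 'M_n) :
  (forall i j, mcvg (fun t => A t i j) (L i j)) -> mcvg (fun t => \det (A t)) (\det L).
Proof. exact: (Cv_det (@mcvg_ext) (@mcvg_cst) (@mcvg_add) (@mcvg_mul)). Qed.

Lemma mcvg_sub_seq (phi : nat -> nat) P p : (forall t, (phi t < phi t.+1)%N) ->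
  mcvg P p -> mcvg (fun t => P (phi t)) p.
Proof. by move=> inc h m; apply: (cvg_sub_seq inc (h m)). Qed.

Lemma mcvg_lform (c : nat -> 'I_K -> F) (cl : 'I_K -> F) :
  (forall k, cvgF (fun t => c t k) (cl k)) ->
  mcvg (fun t => lform (\row_k c t k)) (lform (\row_k cl k)).
Proof.
move=> h; rewrite /lform.
apply: mcvg_ext; last first.
  apply: mcvg_sum => k _; apply: mcvg_mul; last exact: mcvg_cst.
  by apply: mcvgC; rewrite mxE; exact: h.
by move=> t /=; apply: eq_bigr => k _; rewrite mxE.
Qed.

Lemma mcvg_pT n (S : nat -> 'I_K -> 'M[F]_n) (T : 'I_K -> 'M[F]_n) :
  (forall k i j, cvgF (fun t => S t k i j) (T k i j)) ->
  mcvg (fun t => pT (S t)) (pT T).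
Proof.
move=> h; apply: mcvg_det => i j; rewrite mxE.
apply: mcvg_ext; last first.
  apply: mcvg_sum => k _; apply: mcvg_mul; first exact: mcvg_cst.
  by apply: mcvgC; apply: h.
by move=> t; rewrite mxE.
Qed.
End MCvg.
Section PartF.
Variables (F : numFieldType) (n K : nat).

Lemma argmax (I : finType) (f : I -> F) (i0 : I) : exists i, forall j, `|f j| <= `|f i|.
Proof.
suff [i hi] : exists i, forall j, j \in enum I -> `|f j| <= `|f i|.
  by exists i => j; apply: hi; rewrite mem_enum.
elim: (enum I) => [|a s [i hi]]; first by exists i0.
have [ai|ia] := boolP (`|f a| <= `|f i|).
  exists i => j; rewrite inE => /orP[/eqP -> //|]; exact: hi.
have ia' : `|f i| <= `|f a|.
  by have := ger_leVge (normr_ge0 (f a)) (normr_ge0 (f i)); rewrite (negbTE ia).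
exists a => j; rewrite inE => /orP[/eqP -> //|/hi h]; exact: le_trans h ia'.
Qed.

Lemma normalize (I : finType) (f : I -> F) : (exists i, f i != 0) ->
  exists i, f i != 0 /\ forall j, `|f j / f i| <= 1.
Proof.
move=> [i0 h0]; have [i hi] := argmax f i0.
have fi : f i != 0.
  apply: contraNneq h0 => e; have := hi i0; rewrite e normr0 normr_le0 => /eqP //.
exists i; split => // j; rewrite normrM normrV ?unitfE //.
by rewrite ler_pdivrMr ?normr_gt0 // mul1r.
Qed.

Lemma decomp (T' : 'I_K -> 'M[F]_n) : rank_le T' n ->
  exists (A B : 'M[F]_n) (c0 : 'I_n -> 'I_K -> F),
    (forall k, T' k = A *m diag_mx (\row_s c0 s k) *m B).
Proof.
move=> [a [bb [c0 h]]].
exists (\matrix_(i, s) a s i), (\matrix_(s, j) bb s j), c0 => k.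
apply/matrixP => i j; rewrite h mxE; apply: eq_bigr => s _.
by rewrite mul_mx_diag !mxE mulrAC.
Qed.
End PartF.
Section PartG.
Variables (F : numFieldType) (n K : nat).

Lemma entry_diag (R : pzSemiRingType) (A B : 'M[R]_n) (d : 'rV[R]_n) i j :
  (A *m diag_mx d *m B) i j = \sum_s A i s * d 0 s * B s j.
Proof. by rewrite mxE; apply: eq_bigr => s _; rewrite mul_mx_diag mxE. Qed.

Lemma time_data (T' : 'I_K -> 'M[F]_n) (g : 'I_K -> F) : rank_le T' n ->
  \det (\sum_k g k *: T' k) != 0 ->
  exists (kap : F) (c : 'I_n -> 'I_K -> F) (x : 'I_n -> 'I_n -> F),
    [/\ (forall s k, `|c s k| <= 1) /\ (forall s, exists k, c s k = 1),
        (forall s i, `|x s i| <= 1) /\ (forall s, exists i, x s i = 1),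
        pT T' = kap%:MP * \prod_s lform (\row_k c s k) &
        forall s k l i, c s l * (\sum_j T' k i j * x s j) = c s k * (\sum_j T' l i j * x s j)].
Proof.
move=> /decomp [A [B [c0 eT]]] hdet.
have eTe : forall k i j, T' k i j = \sum_s A i s * c0 s k * B s j.
  by move=> k i j; rewrite eT entry_diag; apply: eq_bigr => s _; rewrite mxE.
have eM : \sum_k g k *: T' k = A *m diag_mx (\row_s \sum_k g k * c0 s k) *m B.
  apply/matrixP => i j; rewrite entry_diag summxE.
  transitivity (\sum_k \sum_s g k * (A i s * c0 s k * B s j)).
    by apply: eq_bigr => k _; rewrite mxE eTe mulr_sumr.
  rewrite exchange_big /=; apply: eq_bigr => s _; rewrite mxE mulr_sumr mulr_suml /=.
  by apply: eq_bigr => k _; ring.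
move: hdet; rewrite eM !det_mulmx det_diag !mulf_eq0 !negb_or => /andP[/andP[dA /prodf_neq0 hs] dB].
have hc0 : forall s, exists k, c0 s k != 0.
  move=> s; apply/existsP; move: (hs s isT); rewrite mxE; apply: contraTT.
  move=> /existsPn h; rewrite negbK; apply/eqP/big1 => k _.
  by rewrite (eqP (negbNE (h k))) mulr0.
have Bu : B \in unitmx by rewrite unitmxE unitfE.
set Binv := invmx B.
have hx0 : forall s, exists j, Binv j s != 0.
  move=> s; apply/existsP; apply: contraT => /existsPn h.
  have : (B *m Binv) s s = 0.
    by rewrite mxE big1 // => j _; rewrite (eqP (negbNE (h j))) mulr0.
  by rewrite mulmxV // mxE eqxx => /eqP; rewrite oner_eq0.
have heig : forall k i s, \sum_j T' k i j * Binv j s = A i s * c0 s k.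
  move=> k i s; have := congr1 (fun M : 'M[F]_n => M i s) (mulmxK Bu (A *m diag_mx (\row_s c0 s k))).
  rewrite -eT mul_mx_diag !mxE => <-; by [].
have hP : pT T' = (\det A * \det B)%:MP * \prod_s lform (\row_k c0 s k).
  have eMP : MP T' = map_mx (@mpolyC K F) A *m diag_mx (\row_s lform (\row_k c0 s k))
                     *m map_mx (@mpolyC K F) B.
    apply/matrixP => i j; rewrite entry_diag !mxE.
    transitivity (\sum_k \sum_s 'X_k * ((A i s)%:MP * (c0 s k)%:MP * (B s j)%:MP)).
      by apply: eq_bigr => k _; rewrite eTe rmorph_sum mulr_sumr; apply: eq_bigr => s _; rewrite !rmorphM.
    rewrite exchange_big /=; apply: eq_bigr => s _; rewrite !mxE /lform mulr_sumr mulr_suml.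
    by apply: eq_bigr => k _; rewrite !mxE; ring.
  rewrite pTE eMP !det_mulmx !det_map_mx det_diag rmorphM /=.
  rewrite mulrAC; congr (_ * _); apply: eq_bigr => s _; by rewrite mxE.
have [ks hks] := choice (fun s => normalize (hc0 s)).
have [js hjs] := choice (fun s => @normalize _ _ (fun j => Binv j s) (hx0 s)).
exists (\det A * \det B * \prod_s c0 s (ks s)), (fun s k => c0 s k / c0 s (ks s)),
  (fun s j => Binv j s / Binv (js s) s).
split.
- split; first by move=> s k; exact: (hks s).2.
  by move=> s; exists (ks s); rewrite divff // (hks s).1.
- split; first by move=> s j; exact: (hjs s).2.
  by move=> s; exists (js s); rewrite divff // (hjs s).1.
- rewrite hP [in RHS]rmorphM /= rmorph_prod -mulrA; congr (_ * _); rewrite -big_split /=.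
  apply: eq_bigr => s _; rewrite -lformZ; congr lform; apply/matrixP => i k.
  by rewrite !mxE mulrC divfK // (hks s).1.
- move=> s k l i.
  have e : forall k', \sum_j T' k' i j * (Binv j s / Binv (js s) s) =
                    (A i s * c0 s k') / Binv (js s) s.
    by move=> k'; rewrite -heig mulr_suml; apply: eq_bigr => j _; rewrite mulrA.
  rewrite !e; ring.
Qed.
End PartG.
Section PartH.
Variables (F : numFieldType) (n K : nat).
Hypothesis BWs : forall u : nat -> F, (forall t, `|u t| <= 1) ->
  exists phi : nat -> nat, (forall t, (phi t < phi t.+1)%N) /\
    exists l, cvgF (fun t => u (phi t)) l.

Lemma limit_data (T : 'I_K -> 'M[F]_n) (g : 'I_K -> F) (S : nat -> 'I_K -> 'M[F]_n) :
  (\sum_k g k *: T k) \in unitmx -> (forall m, rank_le (S m) n) -> tensor_cvg S T ->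
  exists (kap : F) (cl : 'I_n -> 'I_K -> F) (xl : 'I_n -> 'I_n -> F),
   [/\ forall s, exists k, cl s k != 0, forall s, exists i, xl s i != 0,
       pT T = kap%:MP * \prod_s lform (\row_k cl s k) &
       forall s k l i, cl s l * (\sum_j T k i j * xl s j) = cl s k * (\sum_j T l i j * xl s j)].
Proof.
move=> hu hr hS.
have hS' : forall k i j, cvgF (fun t => S t k i j) (T k i j).
  move=> k i j e e0; have [N hN] := hS e e0; exists N => t ht; exact: hN.
have hdet : cvgF (fun t => \det (\sum_k g k *: S t k)) (\det (\sum_k g k *: T k)).
  apply: cvgF_det => i j.
  have -> : (\sum_k g k *: T k) i j = \sum_k g k * T k i j.
    by rewrite summxE; apply: eq_bigr => k _; rewrite mxE.
  apply: cvg_ext; last first.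
    by apply: cvgF_sum => k _; apply: cvgM; [apply: cvg_cst | apply: hS'].
  by move=> t /=; rewrite summxE; apply: eq_bigr => k _; rewrite mxE.
have d0 : \det (\sum_k g k *: T k) != 0 by rewrite -unitfE -unitmxE.
have [N0 hN0] := cvg_neq0_ev d0 hdet.
pose Dt := ((F * ('I_n -> 'I_K -> F)) * ('I_n -> 'I_n -> F))%type.
have hd : forall t, exists d : Dt,
    [/\ (forall s k, `|d.1.2 s k| <= 1) /\ (forall s, exists k, d.1.2 s k = 1),
        (forall s i, `|d.2 s i| <= 1) /\ (forall s, exists i, d.2 s i = 1),
        pT (S (t + N0)%N) = (d.1.1)%:MP * \prod_s lform (\row_k d.1.2 s k) &
        forall s k l i, d.1.2 s l * (\sum_j S (t + N0)%N k i j * d.2 s j) =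
                        d.1.2 s k * (\sum_j S (t + N0)%N l i j * d.2 s j)].
  move=> t; have [kap [c [x H]]] := time_data (hr (t + N0)%N) (hN0 _ (leq_addl _ _)).
  by exists (kap, c, x).
have [f hf] := choice hd.
have hcb : forall t (p : 'I_n * 'I_K), `|(f t).1.2 p.1 p.2| <= 1.
  move=> t p; have := hf t; move=> [[h _] _ _ _]; apply: h.
have [phi1 [inc1 [cl' hcl']]] := BW_vec BWs hcb.
have hxb : forall t (p : 'I_n * 'I_n), `|(f (phi1 t)).2 p.1 p.2| <= 1.
  by move=> t p; case: (hf (phi1 t)) => [_ [h _] _ _]; exact: h.
have [phi2 [inc2 [xl' hxl']]] := BW_vec BWs hxb.
pose phi := fun t => phi1 (phi2 t).
have inc : forall t, (phi t < phi t.+1)%N by exact: (inc_comp inc1 inc2).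
pose cl := fun s k => cl' (s, k); pose xl := fun s j => xl' (s, j).
have hc : forall s k, cvgF (fun t => (f (phi t)).1.2 s k) (cl s k).
  by move=> s k; exact: (cvg_sub_seq inc2 (hcl' (s, k))).
have hx : forall s j, cvgF (fun t => (f (phi t)).2 s j) (xl s j).
  by move=> s j; exact: (hxl' (s, j)).
pose psi := fun t => (phi t + N0)%N.
have incp : forall t, (psi t < psi t.+1)%N by move=> t; rewrite /psi ltn_add2r; exact: inc.
have hSp : forall k i j, cvgF (fun t => S (psi t) k i j) (T k i j).
  by move=> k i j; exact: (cvg_sub_seq incp (hS' k i j)).
have hrel : forall s k l i, cl s l * (\sum_j T k i j * xl s j) = cl s k * (\sum_j T l i j * xl s j).
  move=> s k l i.
  have cv : forall k l, cvgF (fun t => (f (phi t)).1.2 s l * \sum_j S (psi t) k i j * (f (phi t)).2 s j)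
                          (cl s l * \sum_j T k i j * xl s j).
    move=> k' l'; apply: cvgM; first exact: hc.
    by apply: cvgF_sum => j _; apply: cvgM; [apply: hSp | apply: hx].
  apply: cvg_uniq (cv k l) _; apply: cvg_ext (cv l k) => t.
  by case: (hf (phi t)) => _ _ _ ->.
have hcnz : forall s, exists k, cl s k != 0.
  move=> s; apply/existsP; apply: contraT => /existsPn h.
  have [N hN] := ev_fin (P := fun k t => `|(f (phi t)).1.2 s k - cl s k| < 1)
                        (fun k => hc s k 1 ltr01).
  case: (hf (phi N)) => [[_ h1] _ _ _]; have [k hk] := h1 s.
  by have := hN k N (leqnn N); rewrite hk (eqP (negbNE (h k))) subr0 normr1 ltxx.
have hxnz : forall s, exists j, xl s j != 0.
  move=> s; apply/existsP; apply: contraT => /existsPn h.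
  have [N hN] := ev_fin (P := fun j t => `|(f (phi t)).2 s j - xl s j| < 1)
                        (fun j => hx s j 1 ltr01).
  case: (hf (phi N)) => [_ [_ h1] _ _]; have [j hj] := h1 s.
  by have := hN j N (leqnn N); rewrite hj (eqP (negbNE (h j))) subr0 normr1 ltxx.
have hP : mcvg (fun t => pT (S (psi t))) (pT T) by exact: mcvg_pT.
have hQ : mcvg (fun t => \prod_s lform (\row_k (f (phi t)).1.2 s k)) (\prod_s lform (\row_k cl s k)).
  by apply: mcvg_prod => s _; apply: mcvg_lform => k; exact: hc.
set Q := \prod_s lform (\row_k cl s k).
have Q0 : Q != 0.
  apply/prodf_neq0 => s _; apply: lform_neq0; have [k hk] := hcnz s.
  apply: contraNneq hk => e; have := congr1 (fun M : 'rV[F]_K => M 0 k) e.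
  by rewrite !mxE => ->.
have [m Qm] : exists m, Q@_m != 0.
  case: (pselect (exists m, Q@_m != 0)) => // hno; exfalso.
  move/eqP: Q0; apply; apply/mpolyP => m; rewrite mcoeff0; apply/eqP.
  by apply: contraT => hm; case: hno; exists m.
have key : forall m', (pT T)@_m' * Q@_m = (pT T)@_m * Q@_m'.
  move=> m'; have e1 := cvgM (hP m') (hQ m); have e2 := cvgM (hP m) (hQ m').
  apply: cvg_uniq e1 _; apply: cvg_ext e2 => t /=.
  case: (hf (phi t)) => _ _ -> _; rewrite !mcoeffCM; ring.
exists ((pT T)@_m / Q@_m), cl, xl; split => //.
apply/mpolyP => m'; rewrite mcoeffCM; apply: (mulIf Qm); rewrite key.
by rewrite mulrAC divfK.
Qed.
End PartH.
Lemma rowc_neq0 (F : numFieldType) m (c : 'I_m -> F) : (exists k, c k != 0) -> \row_k c k != 0.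
Proof.
move=> [k hk]; apply: contraNneq hk => e.
by have := congr1 (fun M : 'rV[F]_m => M 0 k) e; rewrite !mxE => ->.
Qed.

Lemma colc_neq0 (F : numFieldType) m (c : 'I_m -> F) : (exists k, c k != 0) -> \col_k c k != 0.
Proof.
move=> [k hk]; apply: contraNneq hk => e.
by have := congr1 (fun M : 'cV[F]_m => M k 0) e; rewrite !mxE => ->.
Qed.

Lemma part3 (b : bool) (n K : nat) (T : 'I_K -> 'M[KR b]_n) :
  slice_mix_invertible T -> border_rank_eq T n ->
  exists c : 'I_n -> 'rV[KR b]_K,
    pT T = \prod_(i < n) lform (c i) /\ forall i, jge_value T (c i).
Proof.
case: n T => [|n] T hT [[S [hr hS]] _].
  exists (fun _ => 0); split; last by case.
  by rewrite big_ord0 pTE det_mx00.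
have [g hg] := hT.
have [kap [cl [xl [hcnz hxnz hP hrel]]]] := limit_data (@BW_K b) hg hr hS.
have k0 : kap != 0.
  by apply: contraNneq (pT_neq0 hT) => e; rewrite hP e rmorph0 mul0r.
exists (fun i => if i == ord0 then kap *: \row_k cl i k else \row_k cl i k); split.
  rewrite hP !big_ord_recl eqxx lformZ -mulrA; congr (_ * (_ * _)).
move=> i; exists (\col_j xl i j); exists (\row_k cl i k); split.
  case: ifP => _; apply/eqmxP; last exact: eqmx_refl.
  by apply: eqmx_sym; apply: eqmx_scale.
apply: (rel_jge hg); [exact: rowc_neq0 | exact: colc_neq0 |].
move=> k l j.
have e : forall k', (T k' *m \col_j0 xl i j0) j 0 = \sum_j0 T k' j j0 * xl i j0.
  by move=> k'; rewrite mxE; apply: eq_bigr => j0 _; rewrite mxE.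
by rewrite !e !mxE hrel.
Qed.

Theorem proposition3p3 (b : bool) (n K : nat) (T : 'I_K -> 'M[KR b]_n) :
  slice_mix_invertible T ->
  (forall lam : 'rV[KR b]_K, lam != 0 -> (gm T lam <= am T lam)%N) /\
  (forall (lam : 'rV[KR b]_K) (x : 'cV[KR b]_n), jge_pair T lam x ->
     exists m : nat, (0 < m)%N /\
       exists g : {mpoly (KR b)[K]}, g != 0 /\ pT T = lform lam ^+ m * g) /\
  (border_rank_eq T n ->
     exists c : 'I_n -> 'rV[KR b]_K,
       pT T = \prod_(i < n) lform (c i) /\ forall i, jge_value T (c i)).
Proof.
move=> hT; split; first exact: part1.
split; first exact: part2.
exact: part3.
Qed.
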